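(* Let $\Omega\subset\mathbb{C}$ be a simply connected domain, let $(h,\mathcal{M},\mathcal{N})$ be a Weierstrass data of the second kind on $\Omega$, and let $\tau\in\mathbb{R}$. Set $h_\tau:=e^{-i\tau}h$ and $\mathcal{N}_\tau:=\mathcal{N}$. Then there exists a $\mathcal{C}^2$ function $\mathcal{M}_\tau:\Omega\to\mathbb{R}$ satisfying $$(\mathcal{M}_\tau)_z=e^{i\tau}\mathcal{M}_z-\frac{e^{i\tau}-e^{-i\tau}}{2}\,h\,\mathcal{N}_z,$$ and for any such $\mathcal{M}_\tau$ the triple $(h_\tau,\mathcal{M}_\tau,\mathcal{N}_\tau)$ is a Weierstrass data of the second kind on $\Omega$.
   Context: $\Omega\subset\mathbb{R}^2\equiv\mathbb{C}$ has complex coordinate $z=u+iv$, and $\partial_z=\frac12(\partial_u-i\partial_v)$, $\partial_{\overline z}=\frac12(\partial_u+i\partial_v)$; subscripts denote partial derivatives. A Weierstrass data of the second kind on $\Omega$ is a triple $(h,\mathcal{M},\mathcal{N})$ where $h:\Omega\to\mathbb{C}\setminus\{0\}$ and $\mathcal{M},\mathcal{N}:\Omega\to\mathbb{R}$ are $\mathcal{C}^2$, satisfying $h_{\overline z}=0$, $\mathcal{M}_{z\overline z}=(\mathrm{Re}\,h)\,\mathcal{N}_{z\overline z}$, and $\mathcal{M}_z-(\mathrm{Re}\,h)\,\mathcal{N}_z\neq0$ at every point of $\Omega$. *)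

(* Defs.v *)
From Stdlib Require Import Reals.
From Coquelicot Require Import Coquelicot.
Open Scope R_scope.

(* We identify C with R^2 via z = u + i v.  A subset of the plane is a
   predicate Om : R -> R -> Prop on the coordinates (u, v). *)

Definition unit_I (t : R) : Prop := 0 <= t <= 1.
Definition unit_sq (p : R * R) : Prop := unit_I (fst p) /\ unit_I (snd p).
Definition in_set (Om : R -> R -> Prop) (p : R * R) : Prop := Om (fst p) (snd p).

Definition cont_path (g : R -> R * R) : Prop :=
  forall t, unit_I t -> filterlim g (within unit_I (locally t)) (locally (g t)).

Definition cont_sq (H : R * R -> R * R) : Prop :=
  forall p, unit_sq p -> filterlim H (within unit_sq (locally p)) (locally (H p)).

Definition path_in (Om : R -> R -> Prop) (g : R -> R * R) : Prop :=
  cont_path g /\ forall t, unit_I t -> in_set Om (g t).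

Definition domain (Om : R -> R -> Prop) : Prop :=
  (exists u v, Om u v) /\
  open (in_set Om) /\
  (forall p q, in_set Om p -> in_set Om q ->
     exists g, path_in Om g /\ g 0 = p /\ g 1 = q).

Definition simply_connected_domain (Om : R -> R -> Prop) : Prop :=
  domain Om /\
  forall g, path_in Om g -> g 0 = g 1 ->
    exists H : R * R -> R * R,
      cont_sq H /\ (forall p, unit_sq p -> in_set Om (H p)) /\
      (forall t, unit_I t -> H (0, t) = g t /\ H (1, t) = g 0) /\
      (forall s, unit_I s -> H (s, 0) = g 0 /\ H (s, 1) = g 0).

Definition pu (f : R -> R -> R) (u v : R) : R := Derive (fun x => f x v) u.
Definition pv (f : R -> R -> R) (u v : R) : R := Derive (fun y => f u y) v.

Definition C1_on (Om : R -> R -> Prop) (f : R -> R -> R) : Prop :=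
  forall u v, Om u v ->
    ex_derive (fun x => f x v) u /\ ex_derive (fun y => f u y) v /\
    continuity_2d_pt f u v /\
    continuity_2d_pt (pu f) u v /\ continuity_2d_pt (pv f) u v.

Definition C2_on (Om : R -> R -> Prop) (f : R -> R -> R) : Prop :=
  C1_on Om f /\ C1_on Om (pu f) /\ C1_on Om (pv f).

Definition ReF (g : R -> R -> C) : R -> R -> R := fun u v => fst (g u v).
Definition ImF (g : R -> R -> C) : R -> R -> R := fun u v => snd (g u v).
Definition CC2_on (Om : R -> R -> Prop) (g : R -> R -> C) : Prop :=
  C2_on Om (ReF g) /\ C2_on Om (ImF g).

Definition Cpu (g : R -> R -> C) (u v : R) : C := (pu (ReF g) u v, pu (ImF g) u v).
Definition Cpv (g : R -> R -> C) (u v : R) : C := (pv (ReF g) u v, pv (ImF g) u v).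

Definition dz (g : R -> R -> C) (u v : R) : C :=
  (RtoC (/ 2) * (Cpu g u v - Ci * Cpv g u v))%C.
Definition dzb (g : R -> R -> C) (u v : R) : C :=
  (RtoC (/ 2) * (Cpu g u v + Ci * Cpv g u v))%C.

Definition cplx (f : R -> R -> R) : R -> R -> C := fun u v => RtoC (f u v).

Definition WD2 (Om : R -> R -> Prop) (h : R -> R -> C) (M N : R -> R -> R) : Prop :=
  CC2_on Om h /\ C2_on Om M /\ C2_on Om N /\
  forall u v, Om u v ->
    h u v <> RtoC 0 /\
    dzb h u v = RtoC 0 /\
    dzb (dz (cplx M)) u v = (RtoC (fst (h u v)) * dzb (dz (cplx N)) u v)%C /\
    (dz (cplx M) u v - RtoC (fst (h u v)) * dz (cplx N) u v)%C <> RtoC 0.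

Definition cis (t : R) : C := (cos t, sin t).

(* Main.v *)
Require Import Defs.
From Stdlib Require Import Reals Lra Lia Classical ClassicalEpsilon.
From Coquelicot Require Import Coquelicot.
Open Scope R_scope.

Lemma ballR (x y e : R) : ball x e y <-> Rabs (y - x) < e.
Proof. reflexivity. Qed.

Definition inbox (c : R*R) (r : R) (q : R*R) :=
  Rabs (fst q - fst c) < r /\ Rabs (snd q - snd c) < r.
Definition goodbox (Om : R -> R -> Prop) (c : R*R) (r : R) :=
  0 < r /\ forall q, inbox c r q -> in_set Om q.

Lemma open_box (Om : R -> R -> Prop) : open (in_set Om) ->
  forall p, in_set Om p -> exists r : posreal, goodbox Om p r.
Proof.
  intros Ho p Hp. destruct (Ho p Hp) as [e He].
  exists e. split. apply cond_pos. intros q [H1 H2]. apply He. split; assumption.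
Qed.

Lemma between_abs (x y t c r : R) : Rabs (x - c) < r -> Rabs (y - c) < r ->
  Rmin x y <= t <= Rmax x y -> Rabs (t - c) < r.
Proof.
  intros H1 H2 [H3 H4]. apply Rabs_lt_between in H1. apply Rabs_lt_between in H2.
  apply Rabs_lt_between. unfold Rmin, Rmax in *.
  destruct (Rle_dec x y); lra.
Qed.

Lemma inbox_open c r q : inbox c r q -> exists e : posreal,
  forall q', Rabs (fst q' - fst q) < e -> Rabs (snd q' - snd q) < e -> inbox c r q'.
Proof.
  intros [H1 H2].
  assert (He : 0 < Rmin (r - Rabs (fst q - fst c)) (r - Rabs (snd q - snd c))).
  { apply Rmin_glb_lt; lra. }
  exists (mkposreal _ He). simpl. intros q' H3 H4.
  pose proof (Rmin_l (r - Rabs (fst q - fst c)) (r - Rabs (snd q - snd c))).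
  pose proof (Rmin_r (r - Rabs (fst q - fst c)) (r - Rabs (snd q - snd c))).
  split.
  - replace (fst q' - fst c) with ((fst q' - fst q) + (fst q - fst c)) by ring.
    eapply Rle_lt_trans. apply Rabs_triang. lra.
  - replace (snd q' - snd c) with ((snd q' - snd q) + (snd q - snd c)) by ring.
    eapply Rle_lt_trans. apply Rabs_triang. lra.
Qed.

Lemma cont2_x (f : R -> R -> R) x y : continuity_2d_pt f x y -> continuous (fun t => f x t) y.
Proof.
  intros H. apply continuity_2d_pt_filterlim in H.
  apply (filterlim_comp _ _ _ (fun t => (x, t)) (fun z => f (fst z) (snd z)) _ (locally (x,y))).
  2: exact H.
  intros P [e He]. exists e. intros t Ht. apply He. split; [apply ball_center | exact Ht].
Qed.

Lemma cont2_y (f : R -> R -> R) x y : continuity_2d_pt f x y -> continuous (fun t => f t y) x.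
Proof.
  intros H. apply continuity_2d_pt_filterlim in H.
  apply (filterlim_comp _ _ _ (fun t => (t, y)) (fun z => f (fst z) (snd z)) _ (locally (x,y))).
  2: exact H.
  intros P [e He]. exists e. intros t Ht. apply He. split; [exact Ht | apply ball_center].
Qed.

Lemma isd_plus (f g : R -> R) x df dg : is_derive f x df -> is_derive g x dg -> is_derive (fun t => f t + g t) x (df + dg).
Proof. intros. apply (is_derive_plus f g); auto. Qed.
Lemma isd_minus (f g : R -> R) x df dg : is_derive f x df -> is_derive g x dg -> is_derive (fun t => f t - g t) x (df - dg).
Proof. intros. apply (is_derive_minus f g); auto. Qed.
Lemma isd_const (k x : R) : is_derive (fun _ : R => k) x 0.
Proof. apply (is_derive_const k x). Qed.

Lemma C1_exu Om f u v : C1_on Om f -> Om u v -> ex_derive (fun x => f x v) u.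
Proof. intros H1 H2. exact (proj1 (H1 u v H2)). Qed.
Lemma C1_exv Om f u v : C1_on Om f -> Om u v -> ex_derive (fun y => f u y) v.
Proof. intros H1 H2. exact (proj1 (proj2 (H1 u v H2))). Qed.
Lemma C1_c Om f u v : C1_on Om f -> Om u v -> continuity_2d_pt f u v.
Proof. intros H1 H2. exact (proj1 (proj2 (proj2 (H1 u v H2)))). Qed.
Lemma C1_cu Om f u v : C1_on Om f -> Om u v -> continuity_2d_pt (pu f) u v.
Proof. intros H1 H2. exact (proj1 (proj2 (proj2 (proj2 (H1 u v H2))))). Qed.
Lemma C1_cv Om f u v : C1_on Om f -> Om u v -> continuity_2d_pt (pv f) u v.
Proof. intros H1 H2. exact (proj2 (proj2 (proj2 (proj2 (H1 u v H2))))). Qed.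

Definition Dp (a b : R->R->R) (p q : R*R) : R :=
  RInt (fun x => a x (snd p)) (fst p) (fst q) + RInt (fun y => b (fst q) y) (snd p) (snd q).

Section Prim.
Variables (Om : R -> R -> Prop) (a b : R -> R -> R).
Hypothesis Ha : C1_on Om a.
Hypothesis Hb : C1_on Om b.
Hypothesis Hcl : forall u v, Om u v -> pv a u v = pu b u v.

Lemma loc_y c r q : inbox c r q -> locally (snd q) (fun y => inbox c r (fst q, y)).
Proof.
  intros Hq. destruct (inbox_open c r q Hq) as [e He]. exists e. intros y Hy.
  apply He; simpl. rewrite Rminus_eq_0, Rabs_R0. apply cond_pos. exact Hy.
Qed.

Lemma loc_x c r q : inbox c r q -> locally (fst q) (fun x => inbox c r (x, snd q)).
Proof.
  intros Hq. destruct (inbox_open c r q Hq) as [e He]. exists e. intros y Hy.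
  apply He; simpl. exact Hy. rewrite Rminus_eq_0, Rabs_R0. apply cond_pos.
Qed.

Lemma exRInt_b c r x y1 y2 : goodbox Om c r -> inbox c r (x, y1) -> inbox c r (x, y2) ->
  ex_RInt (fun y => b x y) y1 y2.
Proof.
  intros [_ Hg] [H1 H2] [H3 H4]. apply (ex_RInt_continuous (V:=R_CompleteNormedModule)). intros z Hz.
  apply cont2_x. apply (C1_c Om b); [exact Hb|]. apply (Hg (x, z)). split; simpl in *. auto.
  eapply between_abs; [exact H2 | exact H4 | exact Hz].
Qed.

Lemma exRInt_a c r y x1 x2 : goodbox Om c r -> inbox c r (x1, y) -> inbox c r (x2, y) ->
  ex_RInt (fun x => a x y) x1 x2.
Proof.
  intros [_ Hg] [H1 H2] [H3 H4]. apply (ex_RInt_continuous (V:=R_CompleteNormedModule)). intros z Hz.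
  apply cont2_y. apply (C1_c Om a); [exact Ha|]. apply (Hg (z, y)). split; simpl in *.
  eapply between_abs; [exact H1 | exact H3 | exact Hz]. auto.
Qed.

Lemma Dprim_v c r p q : goodbox Om c r -> inbox c r p -> inbox c r q ->
  is_derive (fun y => Dp a b p (fst q, y)) (snd q) (b (fst q) (snd q)).
Proof.
  intros Hg Hp Hq. unfold Dp; simpl.
  assert (Hpq : inbox c r (fst q, snd p)).
  { destruct Hp, Hq; split; simpl; auto. }
  replace (b (fst q) (snd q)) with (0 + (b (fst q) (snd q))) by ring.
  apply isd_plus. apply isd_const.
  apply (is_derive_RInt (fun y0 => b (fst q) y0) (fun y => RInt (fun y0 => b (fst q) y0) (snd p) y) (snd p)).
  - apply (filter_imp (fun y => inbox c r (fst q, y))). 2: apply loc_y; auto.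
    intros y Hy. apply (RInt_correct (V:=R_CompleteNormedModule)). eapply exRInt_b; eauto.
  - apply cont2_x. apply (C1_c Om b); [exact Hb|]. apply (proj2 Hg). exact Hq.
Qed.

Lemma Dprim_u c r p q : goodbox Om c r -> inbox c r p -> inbox c r q ->
  is_derive (fun x => Dp a b p (x, snd q)) (fst q) (a (fst q) (snd q)).
Proof.
  intros Hg Hp Hq. unfold Dp; simpl.
  assert (Hpq : inbox c r (fst q, snd p)).
  { destruct Hp, Hq; split; simpl; auto. }
  replace (a (fst q) (snd q)) with ((a (fst q) (snd p)) +
     (RInt (fun t => Derive (fun u => b u t) (fst q)) (snd p) (snd q))).
  apply isd_plus.
  - apply (is_derive_RInt (fun x0 => a x0 (snd p)) (fun x => RInt (fun x0 => a x0 (snd p)) (fst p) x) (fst p)).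
    + apply (filter_imp (fun x => inbox c r (x, snd p))). 2: exact (loc_x c r (fst q, snd p) Hpq).
      intros y Hy. apply (RInt_correct (V:=R_CompleteNormedModule)). apply (exRInt_a c r (snd p) (fst p) y); [exact Hg | | exact Hy]. destruct p; exact Hp.
    + apply cont2_y. apply (C1_c Om a); [exact Ha|]. apply (proj2 Hg (fst q, snd p)). exact Hpq.
  - apply is_derive_RInt_param.
    + apply (filter_imp (fun x => inbox c r (x, snd q))). 2: apply loc_x; auto.
      intros x Hx t Ht. apply (C1_exu Om b); [exact Hb|]. apply (proj2 Hg (x, t)). destruct Hx, Hp; split; simpl in *; auto.
      eapply between_abs; [ | | exact Ht]; auto.
    + intros t Ht. apply (C1_cu Om b); [exact Hb|]. apply (proj2 Hg (fst q, t)). destruct Hq, Hp; split; simpl in *; auto.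
      eapply between_abs; [ | | exact Ht]; auto.
    + apply (filter_imp (fun x => inbox c r (x, snd q))). 2: apply loc_x; auto.
      intros x Hx. eapply exRInt_b; eauto. destruct Hx, Hp; split; simpl in *; auto.
  - assert (E : RInt (fun t => Derive (fun u => b u t) (fst q)) (snd p) (snd q)
              = RInt (Derive (fun y => a (fst q) y)) (snd p) (snd q)).
    { apply RInt_ext. intros t Ht. symmetry. apply (Hcl (fst q) t).
      apply (proj2 Hg (fst q, t)). destruct Hq, Hp; split; simpl in *; auto.
      eapply between_abs; [ | | split; apply Rlt_le; apply Ht]; auto. }
    rewrite E, RInt_Derive. ring.
    + intros t Ht. apply (C1_exv Om a); [exact Ha|]. apply (proj2 Hg (fst q, t)). destruct Hq, Hp; split; simpl in *; auto.
      eapply between_abs; [ | | exact Ht]; auto.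
    + intros t Ht. apply (cont2_x (pv a)). apply (C1_cv Om a); [exact Ha|]. apply (proj2 Hg (fst q, t)). destruct Hq, Hp; split; simpl in *; auto.
      eapply between_abs; [ | | exact Ht]; auto.
Qed.

End Prim.

Lemma const_1d (g : R -> R) x0 x1 :
  (forall x, Rmin x0 x1 <= x <= Rmax x0 x1 -> is_derive g x 0) -> g x0 = g x1.
Proof.
  intros H. destruct (MVT_gen g x0 x1 (fun _ => 0)) as [c [_ Hc]].
  - intros x Hx. apply H. lra.
  - intros x Hx. apply continuity_pt_filterlim. apply (ex_derive_continuous (K:=R_AbsRing) (V:=R_NormedModule)).
    exists 0. apply H. exact Hx.
  - lra.
Qed.

Lemma box_const (f : R*R -> R) c r :
  (forall q, inbox c r q -> is_derive (fun x => f (x, snd q)) (fst q) 0 /\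
                            is_derive (fun y => f (fst q, y)) (snd q) 0) ->
  forall q q', inbox c r q -> inbox c r q' -> f q = f q'.
Proof.
  intros H [q1 q2] [q1' q2'] [H1 H2] [H3 H4]; simpl in *.
  transitivity (f (q1', q2)).
  - apply (const_1d (fun x => f (x, q2))). intros x Hx.
    apply (H (x, q2)). split; simpl; auto. eapply between_abs; [exact H1 | exact H3 | exact Hx].
  - apply (const_1d (fun y => f (q1', y))). intros y Hy.
    apply (H (q1', y)). split; simpl; auto. eapply between_abs; [exact H2 | exact H4 | exact Hy].
Qed.

Lemma D_refl a b p : Dp a b p p = 0.
Proof.
  unfold Dp. rewrite !(RInt_point (V:=R_CompleteNormedModule)). unfold zero; simpl. ring.
Qed.

Section Tri.
Variables (Om : R -> R -> Prop) (a b : R -> R -> R).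
Hypothesis Ha : C1_on Om a.
Hypothesis Hb : C1_on Om b.
Hypothesis Hcl : forall u v, Om u v -> pv a u v = pu b u v.

Lemma D_tri c r p q x : goodbox Om c r -> inbox c r p -> inbox c r q -> inbox c r x ->
  Dp a b p x = Dp a b p q + Dp a b q x.
Proof.
  intros Hg Hp Hq Hx.
  assert (E : (fun y => Dp a b p y - Dp a b q y) x = (fun y => Dp a b p y - Dp a b q y) q).
  { apply (box_const (fun y => Dp a b p y - Dp a b q y) c r); auto. intros y Hy. split.
    - replace 0 with (a (fst y) (snd y) - a (fst y) (snd y)) by ring.
      apply (isd_minus (fun t => Dp a b p (t, snd y)) (fun t => Dp a b q (t, snd y))).
      eapply Dprim_u; eauto. eapply Dprim_u; eauto.
    - replace 0 with (b (fst y) (snd y) - b (fst y) (snd y)) by ring.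
      apply (isd_minus (fun t => Dp a b p (fst y, t)) (fun t => Dp a b q (fst y, t))).
      eapply Dprim_v; eauto. eapply Dprim_v; eauto. }
  simpl in E. rewrite D_refl in E. lra.
Qed.

Lemma D_anti c r p q : goodbox Om c r -> inbox c r p -> inbox c r q ->
  Dp a b q p = - Dp a b p q.
Proof.
  intros Hg Hp Hq. pose proof (D_tri c r p q p Hg Hp Hq Hp). rewrite D_refl in H. lra.
Qed.

End Tri.

Fixpoint psum (f : nat -> R) (n : nat) : R :=
  match n with O => 0 | S n => psum f n + f n end.

Lemma psum_ext f g n : (forall k, (k < n)%nat -> f k = g k) -> psum f n = psum g n.
Proof.
  induction n; simpl; intros H. reflexivity.
  rewrite IHn, H. reflexivity. lia. intros k Hk; apply H; lia.
Qed.

Lemma psum_add f n m : psum f (n + m) = psum f n + psum (fun j => f (n + j)%nat) m.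
Proof.
  induction m; simpl. rewrite Nat.add_0_r. ring.
  rewrite Nat.add_succ_r. simpl. rewrite IHm. ring.
Qed.

Lemma psum_mul f n m : psum f (n * m) = psum (fun i => psum (fun j => f (i * m + j)%nat) m) n.
Proof.
  induction n; simpl. reflexivity.
  rewrite Nat.add_comm, psum_add, IHn. reflexivity.
Qed.

Lemma psum_tel (F : nat -> R) n : psum (fun j => F (S j) - F j) n = F n - F 0%nat.
Proof. induction n; simpl. ring. rewrite IHn. ring. Qed.

Lemma psum_minus f g n : psum (fun j => f j - g j) n = psum f n - psum g n.
Proof. induction n; simpl. ring. rewrite IHn. ring. Qed.

Lemma psum_opp f n : psum (fun j => - f j) n = - psum f n.
Proof. induction n; simpl. ring. rewrite IHn. ring. Qed.

Lemma psum_zero f n : (forall k, (k < n)%nat -> f k = 0) -> psum f n = 0.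
Proof. intros H. rewrite (psum_ext f (fun _ => 0)) by auto. clear H. induction n; simpl; auto. rewrite IHn. ring. Qed.

Lemma psum_rev f n : psum f n = psum (fun k => f (n - S k)%nat) n.
Proof.
  induction n. reflexivity.
  change (psum f (S n)) with (psum f n + f n). rewrite IHn.
  pose proof (psum_add (fun k => f (S n - S k)%nat) 1 n) as E.
  change (1 + n)%nat with (S n) in E. rewrite E. simpl. replace (n - 0)%nat with n by lia.
  ring.
Qed.

Definition pt (n k : nat) : R := INR k / INR n.

Lemma pt_cell (n m i j : nat) : (0 < n)%nat -> (0 < m)%nat -> (j <= m)%nat ->
  pt n i <= pt (n * m) (i * m + j) <= pt n (S i).
Proof.
  intros Hn Hm Hj. unfold pt. rewrite mult_INR, plus_INR, mult_INR, S_INR.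
  apply lt_0_INR in Hn. apply lt_0_INR in Hm. apply le_INR in Hj.
  replace ((INR i * INR m + INR j) / (INR n * INR m)) with ((INR i + INR j / INR m) / INR n) by (field; lra).
  assert (0 <= INR j / INR m <= 1).
  { split. apply Rdiv_le_0_compat; [apply pos_INR | lra].
    apply (Rmult_le_reg_r (INR m)); auto. field_simplify; lra. }
  assert (0 < / INR n) by (apply Rinv_0_lt_compat; lra).
  unfold Rdiv. split; apply Rmult_le_compat_r; lra.
Qed.

Lemma pt_0 n : pt n 0 = 0.
Proof. unfold pt. simpl. unfold Rdiv. ring. Qed.
Lemma pt_n n : (0 < n)%nat -> pt n n = 1.
Proof. intros H. unfold pt. apply lt_0_INR in H. field. lra. Qed.
Lemma pt_unit n k : (k <= n)%nat -> (0 < n)%nat -> 0 <= pt n k <= 1.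
Proof.
  intros H1 H2. unfold pt. apply lt_0_INR in H2. apply le_INR in H1. split.
  apply Rdiv_le_0_compat; [apply pos_INR | lra].
  apply (Rmult_le_reg_r (INR n)); auto. field_simplify; lra.
Qed.

Section Paths.
Variables (Om : R -> R -> Prop) (a b : R -> R -> R).
Hypothesis Ha : C1_on Om a.
Hypothesis Hb : C1_on Om b.
Hypothesis Hcl : forall u v, Om u v -> pv a u v = pu b u v.

Definition Sg (g : R -> R*R) (n : nat) : R :=
  psum (fun k => Dp a b (g (pt n k)) (g (pt n (S k)))) n.

Definition gp (g : R -> R*R) (n : nat) : Prop :=
  forall k, (k < n)%nat -> exists c r, goodbox Om c r /\
    forall t, pt n k <= t <= pt n (S k) -> inbox c r (g t).

Lemma tel_box c r (P : nat -> R*R) m : goodbox Om c r ->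
  (forall j, (j <= m)%nat -> inbox c r (P j)) ->
  psum (fun j => Dp a b (P j) (P (S j))) m = Dp a b (P 0%nat) (P m).
Proof.
  intros Hg HP. induction m; simpl. rewrite D_refl. reflexivity.
  rewrite IHm. symmetry. apply (D_tri Om a b Ha Hb Hcl c r); auto.
  all: try (intros; apply HP; lia). all: apply HP; lia.
Qed.

Lemma refine g n m : (0 < n)%nat -> (0 < m)%nat -> gp g n -> gp g (n * m) /\ Sg g (n * m) = Sg g n.
Proof.
  intros Hn Hm Hg. split.
  - intros k Hk.
    assert (Ek : k = ((k / m) * m + (k mod m))%nat). { rewrite Nat.mul_comm. apply Nat.div_mod. lia. }
    assert (Hj : (k mod m < m)%nat). { apply Nat.mod_upper_bound. lia. }
    assert (Hi : (k / m < n)%nat). { apply Nat.Div0.div_lt_upper_bound. rewrite Nat.mul_comm. lia. }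
    revert Ek Hj Hi. generalize (k / m)%nat (k mod m)%nat. intros i j Ek Hj Hi.
    destruct (Hg i Hi) as [c [r [Hc Hr]]]. exists c, r. split; auto.
    intros t Ht. apply Hr. rewrite Ek in Ht.
    replace (S (i * m + j)) with (i * m + S j)%nat in Ht by lia.
    pose proof (pt_cell n m i j Hn Hm ltac:(lia)). pose proof (pt_cell n m i (S j) Hn Hm ltac:(lia)). lra.
  - unfold Sg. rewrite psum_mul. apply psum_ext. intros i Hi.
    destruct (Hg i Hi) as [c [r [Hc Hr]]].
    rewrite (psum_ext _ (fun j => Dp a b (g (pt (n*m) (i*m + j))) (g (pt (n*m) (i*m + S j))))).
    2: { intros k _. do 3 f_equal. lia. }
    rewrite (tel_box c r (fun j => g (pt (n*m) (i*m+j)))); auto.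
    + f_equal; f_equal; unfold pt.
      * rewrite Nat.add_0_r, !mult_INR. apply lt_0_INR in Hm. apply lt_0_INR in Hn. field. split; lra.
      * replace (i * m + m)%nat with (S i * m)%nat by lia. rewrite !mult_INR. apply lt_0_INR in Hm. apply lt_0_INR in Hn. field. split; lra.
    + intros j Hj. apply Hr. apply pt_cell; auto.
Qed.

Lemma Sg_indep g n m : (0 < n)%nat -> (0 < m)%nat -> gp g n -> gp g m -> Sg g n = Sg g m.
Proof.
  intros Hn Hm H1 H2. destruct (refine g n m Hn Hm H1) as [_ E1].
  destruct (refine g m n Hm Hn H2) as [_ E2]. rewrite <- E1, <- E2, Nat.mul_comm. reflexivity.
Qed.

Definition Ip (g : R -> R*R) : R :=
  Sg g (epsilon (inhabits 0%nat) (fun n => (0 < n)%nat /\ gp g n)).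

Lemma Ip_eq g n : (0 < n)%nat -> gp g n -> Ip g = Sg g n.
Proof.
  intros Hn Hg. unfold Ip.
  destruct (epsilon_spec (inhabits 0%nat) (fun n => (0 < n)%nat /\ gp g n)) as [H1 H2].
  exists n; auto. apply Sg_indep; auto.
Qed.

End Paths.

Lemma ballRR (p q : R*R) e : ball p e q <-> Rabs (fst q - fst p) < e /\ Rabs (snd q - snd p) < e.
Proof. reflexivity. Qed.

Lemma cont_path_ed g : cont_path g -> forall t, unit_I t -> forall e : posreal,
  exists d : posreal, forall s, unit_I s -> Rabs (s - t) < d -> ball (g t) e (g s).
Proof.
  intros H t Ht e. destruct (H t Ht (ball (g t) e) (locally_ball (g t) e)) as [d Hd].
  exists d. intros s Hs Hst. apply Hd; auto.
Qed.

Lemma ed_cont_path g : (forall t, unit_I t -> forall e : posreal,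
  exists d : posreal, forall s, unit_I s -> Rabs (s - t) < d -> ball (g t) e (g s)) -> cont_path g.
Proof.
  intros H t Ht P [e He]. destruct (H t Ht e) as [d Hd]. exists d. intros s Hs Hus.
  apply He. apply Hd; auto.
Qed.

Lemma cont_sq_ed (K : R*R -> R*R) : cont_sq K -> forall p, unit_sq p -> forall e : posreal,
  exists d : posreal, forall q, unit_sq q -> Rabs (fst q - fst p) < d -> Rabs (snd q - snd p) < d ->
     ball (K p) e (K q).
Proof.
  intros H p Hp e. destruct (H p Hp (ball (K p) e) (locally_ball (K p) e)) as [d Hd].
  exists d. intros q Hq H1 H2. apply Hd; auto. split; auto.
Qed.

Lemma pt_diff n k : (0 < n)%nat -> pt n (S k) - pt n k = / INR n.
Proof. intros H. unfold pt. rewrite S_INR. apply lt_0_INR in H. field. lra. Qed.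

Section Grid.
Variable Om : R -> R -> Prop.
Hypothesis Hop : open (in_set Om).

Lemma path_gp g : path_in Om g -> exists n, (0 < n)%nat /\ gp Om g n.
Proof.
  intros [Hc Hin].
  assert (Hex : forall t, exists d : posreal, unit_I t -> exists c r, goodbox Om c r /\
     forall s, unit_I s -> Rabs (s - t) < d -> inbox c r (g s)).
  { intros t. destruct (classic (unit_I t)) as [Ht | Ht].
    - destruct (open_box Om Hop (g t) (Hin t Ht)) as [r Hr].
      destruct (cont_path_ed g Hc t Ht r) as [d Hd]. exists d. intros _. exists (g t), r.
      split; [exact Hr |]. intros s Hs Hst. exact (Hd s Hs Hst).
    - exists (mkposreal 1 Rlt_0_1). intros H; contradiction. }
  pose (dl := fun t => proj1_sig (constructive_indefinite_description _ (Hex t))).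
  assert (Hdl : forall t, unit_I t -> exists c r, goodbox Om c r /\
     forall s, unit_I s -> Rabs (s - t) < dl t -> inbox c r (g s)).
  { intros t. unfold dl. destruct (constructive_indefinite_description _ (Hex t)) as [d Hd]. exact Hd. }
  assert (Hpos : forall t, 0 < dl t / 2). { intros t. pose proof (cond_pos (dl t)). lra. }
  destruct (compactness_value_1d 0 1 (fun t => mkposreal _ (Hpos t))) as [d0 Hd0].
  destruct (archimed_cor1 d0 (cond_pos d0)) as [N [HN1 HN2]].
  exists N. split; auto. intros k Hk.
  assert (Hx : 0 <= pt N k <= 1) by (apply pt_unit; lia).
  apply NNPP. intros Hn. apply (Hd0 (pt N k) Hx). intros [t [Ht [H1 H2]]]. apply Hn.
  simpl in H1, H2.
  destruct (Hdl t Ht) as [c [r [Hg Hr]]]. exists c, r. split; auto.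
  intros s Hs. pose proof (pt_diff N k HN2). pose proof (pt_unit N (S k) ltac:(lia) HN2).
  apply Hr. unfold unit_I; lra.
  replace (s - t) with ((s - pt N k) + (pt N k - t)) by ring.
  eapply Rle_lt_trans. apply Rabs_triang. rewrite (Rabs_right (s - pt N k)) by lra. lra.
Qed.

Lemma sq_grid (K : R*R -> R*R) : cont_sq K -> (forall p, unit_sq p -> in_set Om (K p)) ->
  exists N, (0 < N)%nat /\ forall i j, (i < N)%nat -> (j < N)%nat -> exists c r, goodbox Om c r /\
   forall s t, pt N i <= s <= pt N (S i) -> pt N j <= t <= pt N (S j) -> inbox c r (K (s, t)).
Proof.
  intros Hc Hin.
  assert (Hex : forall u v, exists d : posreal, unit_sq (u,v) -> exists c r, goodbox Om c r /\
     forall q, unit_sq q -> Rabs (fst q - u) < d -> Rabs (snd q - v) < d -> inbox c r (K q)).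
  { intros u v. destruct (classic (unit_sq (u,v))) as [Ht | Ht].
    - destruct (open_box Om Hop (K (u,v)) (Hin _ Ht)) as [r Hr].
      destruct (cont_sq_ed K Hc (u,v) Ht r) as [d Hd]. exists d. intros _. exists (K (u,v)), r.
      split; [exact Hr |]. intros q Hq H1 H2. exact (Hd q Hq H1 H2).
    - exists (mkposreal 1 Rlt_0_1). intros H; contradiction. }
  pose (dl := fun u v => proj1_sig (constructive_indefinite_description _ (Hex u v))).
  assert (Hdl : forall u v, unit_sq (u,v) -> exists c r, goodbox Om c r /\
     forall q, unit_sq q -> Rabs (fst q - u) < dl u v -> Rabs (snd q - v) < dl u v -> inbox c r (K q)).
  { intros u v. unfold dl. destruct (constructive_indefinite_description _ (Hex u v)) as [d Hd]. exact Hd. }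
  assert (Hpos : forall u v, 0 < dl u v / 2). { intros u v. pose proof (cond_pos (dl u v)). lra. }
  destruct (compactness_value_2d 0 1 0 1 (fun u v => mkposreal _ (Hpos u v))) as [d0 Hd0].
  destruct (archimed_cor1 d0 (cond_pos d0)) as [N [HN1 HN2]].
  exists N. split; auto. intros i j Hi Hj.
  assert (Hx : 0 <= pt N i <= 1) by (apply pt_unit; lia).
  assert (Hy : 0 <= pt N j <= 1) by (apply pt_unit; lia).
  apply NNPP. intros Hn. apply (Hd0 (pt N i) (pt N j) Hx Hy). intros [u [v [Hu [Hv [H1 [H2 H3]]]]]]. apply Hn.
  simpl in H1, H2, H3.
  destruct (Hdl u v (conj Hu Hv)) as [c [r [Hg Hr]]]. exists c, r. split; auto.
  intros s t Hs Ht. pose proof (pt_diff N i HN2). pose proof (pt_unit N (S i) ltac:(lia) HN2).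
  pose proof (pt_diff N j HN2). pose proof (pt_unit N (S j) ltac:(lia) HN2).
  apply Hr; simpl. split; unfold unit_I; simpl; lra.
  replace (s - u) with ((s - pt N i) + (pt N i - u)) by ring.
  eapply Rle_lt_trans. apply Rabs_triang. rewrite (Rabs_right (s - pt N i)) by lra. lra.
  replace (t - v) with ((t - pt N j) + (pt N j - v)) by ring.
  eapply Rle_lt_trans. apply Rabs_triang. rewrite (Rabs_right (t - pt N j)) by lra. lra.
Qed.

End Grid.

Definition conc (g1 g2 : R -> R*R) (t : R) : R*R :=
  if Rle_dec t (/2) then g1 (2*t) else g2 (2*t - 1).
Definition rev (g : R -> R*R) (t : R) : R*R := g (1 - t).
Definition seg (p q : R*R) (t : R) : R*R :=
  (fst p + t * (fst q - fst p), snd p + t * (snd q - snd p)).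

Lemma conc_l g1 g2 t : t <= /2 -> conc g1 g2 t = g1 (2*t).
Proof. intros H. unfold conc. destruct (Rle_dec t (/2)); [reflexivity | lra]. Qed.
Lemma conc_r g1 g2 t : g1 1 = g2 0 -> /2 <= t -> conc g1 g2 t = g2 (2*t - 1).
Proof.
  intros E H. unfold conc. destruct (Rle_dec t (/2)).
  - assert (t = /2) by lra. subst. replace (2 * /2) with 1 by field. rewrite E. f_equal. field.
  - reflexivity.
Qed.

Lemma pt_double n k : (0 < n)%nat -> pt (n + n) k = pt n k / 2.
Proof. intros H. unfold pt. rewrite plus_INR. apply lt_0_INR in H. field. lra. Qed.

Lemma pt_rev n k : (k <= n)%nat -> (0 < n)%nat -> pt n (n - k) = 1 - pt n k.
Proof. intros H1 H2. unfold pt. rewrite minus_INR by auto. apply lt_0_INR in H2. field. lra. Qed.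

Lemma pt_le n k : (0 < n)%nat -> pt n k <= pt n (S k).
Proof. intros H. pose proof (pt_diff n k H). assert (0 < / INR n) by (apply Rinv_0_lt_compat; apply lt_0_INR; auto). lra. Qed.

Section Glob.
Variables (Om : R -> R -> Prop) (a b : R -> R -> R).
Hypothesis Ha : C1_on Om a.
Hypothesis Hb : C1_on Om b.
Hypothesis Hcl : forall u v, Om u v -> pv a u v = pu b u v.
Hypothesis Hop : open (in_set Om).

Lemma loop_zero g : path_in Om g -> g 0 = g 1 ->
  (exists H : R * R -> R * R,
      cont_sq H /\ (forall p, unit_sq p -> in_set Om (H p)) /\
      (forall t, unit_I t -> H (0, t) = g t /\ H (1, t) = g 0) /\
      (forall s, unit_I s -> H (s, 0) = g 0 /\ H (s, 1) = g 0)) ->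
  Ip Om a b g = 0.
Proof.
  intros Hg Eg [K [Kc [Kin [Kt Ks]]]].
  destruct (sq_grid Om Hop K Kc Kin) as [N [HN Hcell]].
  pose (P := fun i j => K (pt N i, pt N j)).
  pose (V := fun i => psum (fun j => Dp a b (P i j) (P i (S j))) N).
  assert (HU : forall k, (k <= N)%nat -> unit_I (pt N k)) by (intros; apply pt_unit; auto).
  assert (Hstep : forall i, (i < N)%nat -> V (S i) = V i).
  { intros i Hi.
    assert (E : V (S i) - V i = psum (fun j => Dp a b (P i (S j)) (P (S i) (S j)) - Dp a b (P i j) (P (S i) j)) N).
    { unfold V. rewrite <- psum_minus. apply psum_ext. intros j Hj.
      destruct (Hcell i j Hi Hj) as [c [r [Hc Hr]]].
      pose proof (pt_le N i HN); pose proof (pt_le N j HN).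
      assert (I00 : inbox c r (P i j)) by (apply Hr; lra).
      assert (I10 : inbox c r (P (S i) j)) by (apply Hr; lra).
      assert (I01 : inbox c r (P i (S j))) by (apply Hr; lra).
      assert (I11 : inbox c r (P (S i) (S j))) by (apply Hr; lra).
      pose proof (D_tri Om a b Ha Hb Hcl c r (P i j) (P (S i) j) (P (S i) (S j)) Hc I00 I10 I11).
      pose proof (D_tri Om a b Ha Hb Hcl c r (P i j) (P i (S j)) (P (S i) (S j)) Hc I00 I01 I11).
      lra. }
    rewrite (psum_tel (fun j => Dp a b (P i j) (P (S i) j))) in E.
    unfold P in E. rewrite pt_n, pt_0 in E by auto.
    destruct (Ks (pt N i)) as [_ E1]. apply HU; lia.
    destruct (Ks (pt N (S i))) as [_ E2]. apply HU; lia.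
    destruct (Ks (pt N i)) as [E3 _]. apply HU; lia.
    destruct (Ks (pt N (S i))) as [E4 _]. apply HU; lia.
    rewrite E1, E2, E3, E4, !D_refl in E. lra. }
  assert (HV : forall i, (i <= N)%nat -> V i = V 0%nat).
  { induction i; intros Hi. reflexivity. rewrite Hstep by lia. apply IHi. lia. }
  assert (HVN : V N = 0).
  { unfold V. apply psum_zero. intros j Hj. unfold P.
    rewrite pt_n by auto. rewrite (proj2 (Kt _ (HU j ltac:(lia)))), (proj2 (Kt _ (HU (S j) ltac:(lia)))).
    apply D_refl. }
  assert (Hgp : gp Om g N).
  { intros j Hj. destruct (Hcell 0%nat j HN Hj) as [c [r [Hc Hr]]]. exists c, r. split; auto.
    intros t Ht. assert (Hut : unit_I t).
    { pose proof (HU j ltac:(lia)). pose proof (HU (S j) ltac:(lia)). unfold unit_I in *; lra. }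
    rewrite <- (proj1 (Kt t Hut)). apply Hr; auto. pose proof (pt_le N 0 HN). rewrite pt_0 in *. lra. }
  rewrite (Ip_eq Om a b Ha Hb Hcl g N HN Hgp).
  rewrite <- HVN, (HV N (le_n _)). unfold V, Sg, P. apply psum_ext. intros j Hj.
  rewrite pt_0. rewrite (proj1 (Kt _ (HU j ltac:(lia)))), (proj1 (Kt _ (HU (S j) ltac:(lia)))). reflexivity.
Qed.

End Glob.

Lemma conc_path Om g1 g2 : path_in Om g1 -> path_in Om g2 -> g1 1 = g2 0 -> path_in Om (conc g1 g2).
Proof.
  intros [C1 I1] [C2 I2] E. split.
  - apply ed_cont_path. intros t Ht e.
    destruct (Rtotal_order t (/2)) as [Hlt | [Heq | Hgt]].
    + destruct (cont_path_ed g1 C1 (2*t) ltac:(unfold unit_I in *; lra) e) as [d Hd].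
      assert (Hp : 0 < Rmin (d/2) (/2 - t)) by (apply Rmin_glb_lt; [pose proof (cond_pos d) | ]; lra).
      exists (mkposreal _ Hp). simpl. intros s Hs Hst.
      pose proof (Rmin_l (d/2) (/2 - t)). pose proof (Rmin_r (d/2) (/2 - t)).
      apply Rabs_lt_between in Hst.
      rewrite conc_l by lra. rewrite conc_l by lra. apply Hd. unfold unit_I in *; lra.
      apply Rabs_lt_between. lra.
    + subst t. destruct (cont_path_ed g1 C1 1 ltac:(unfold unit_I; lra) e) as [d1 Hd1].
      destruct (cont_path_ed g2 C2 0 ltac:(unfold unit_I; lra) e) as [d2 Hd2].
      assert (Hp : 0 < Rmin d1 d2 / 2) by (pose proof (cond_pos d1); pose proof (cond_pos d2); unfold Rmin; destruct (Rle_dec d1 d2); lra).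
      exists (mkposreal _ Hp). simpl. intros s Hs Hst.
      pose proof (Rmin_l d1 d2). pose proof (Rmin_r d1 d2).
      apply Rabs_lt_between in Hst.
      rewrite conc_l by lra. replace (2 * /2) with 1 by field.
      destruct (Rle_dec s (/2)).
      * rewrite conc_l by lra. apply Hd1. unfold unit_I in *; lra. apply Rabs_lt_between. lra.
      * rewrite conc_r by (auto; lra). rewrite E. apply Hd2. unfold unit_I in *; lra. apply Rabs_lt_between. lra.
    + destruct (cont_path_ed g2 C2 (2*t - 1) ltac:(unfold unit_I in *; lra) e) as [d Hd].
      assert (Hp : 0 < Rmin (d/2) (t - /2)) by (apply Rmin_glb_lt; [pose proof (cond_pos d) | ]; lra).
      exists (mkposreal _ Hp). simpl. intros s Hs Hst.
      pose proof (Rmin_l (d/2) (t - /2)). pose proof (Rmin_r (d/2) (t - /2)).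
      apply Rabs_lt_between in Hst.
      rewrite conc_r by (auto; lra). rewrite conc_r by (auto; lra). apply Hd. unfold unit_I in *; lra.
      apply Rabs_lt_between. lra.
  - intros t Ht. destruct (Rle_dec t (/2)).
    + rewrite conc_l by auto. apply I1. unfold unit_I in *; lra.
    + rewrite conc_r by (auto; lra). apply I2. unfold unit_I in *; lra.
Qed.

Lemma rev_path Om g : path_in Om g -> path_in Om (rev g).
Proof.
  intros [C I]. split.
  - apply ed_cont_path. intros t Ht e.
    destruct (cont_path_ed g C (1 - t) ltac:(unfold unit_I in *; lra) e) as [d Hd].
    exists d. intros s Hs Hst. unfold rev. apply Hd. unfold unit_I in *; lra.
    replace (1 - s - (1 - t)) with (- (s - t)) by ring. rewrite Rabs_Ropp. auto.
  - intros t Ht. apply I. unfold unit_I in *; lra.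
Qed.

Lemma box_convex c r p q t : inbox c r p -> inbox c r q -> 0 <= t <= 1 -> inbox c r (seg p q t).
Proof.
  intros [H1 H2] [H3 H4] Ht. unfold seg; split; simpl.
  - replace (fst p + t * (fst q - fst p) - fst c) with ((1 - t) * (fst p - fst c) + t * (fst q - fst c)) by ring.
    eapply Rle_lt_trans. apply Rabs_triang. rewrite !Rabs_mult, (Rabs_right (1 - t)), (Rabs_right t) by lra.
    destruct (Req_dec t 0). subst. lra. nra.
  - replace (snd p + t * (snd q - snd p) - snd c) with ((1 - t) * (snd p - snd c) + t * (snd q - snd c)) by ring.
    eapply Rle_lt_trans. apply Rabs_triang. rewrite !Rabs_mult, (Rabs_right (1 - t)), (Rabs_right t) by lra.
    destruct (Req_dec t 0). subst. lra. nra.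
Qed.

Lemma seg_path Om c r p q : goodbox Om c r -> inbox c r p -> inbox c r q -> path_in Om (seg p q).
Proof.
  intros Hg Hp Hq. split.
  - apply ed_cont_path. intros t Ht e.
    set (K := 1 + Rabs (fst q - fst p) + Rabs (snd q - snd p)).
    assert (HK : 0 < K) by (unfold K; pose proof (Rabs_pos (fst q - fst p)); pose proof (Rabs_pos (snd q - snd p)); lra).
    assert (Hd : 0 < e / K) by (apply Rdiv_lt_0_compat; [apply cond_pos | auto]).
    exists (mkposreal _ Hd). simpl. intros s Hs Hst. unfold seg. split; simpl.
    + unfold ball; simpl. unfold AbsRing_ball, abs, minus, plus, opp; simpl.
      replace (fst p + s * (fst q - fst p) + - (fst p + t * (fst q - fst p))) with ((s - t) * (fst q - fst p)) by ring.
      rewrite Rabs_mult. assert (Rabs (s - t) * K < e).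
      { apply (Rmult_lt_compat_r K) in Hst; auto. field_simplify in Hst; lra. }
      unfold K in H. pose proof (Rabs_pos (s - t)). pose proof (Rabs_pos (snd q - snd p)). nra.
    + unfold ball; simpl. unfold AbsRing_ball, abs, minus, plus, opp; simpl.
      replace (snd p + s * (snd q - snd p) + - (snd p + t * (snd q - snd p))) with ((s - t) * (snd q - snd p)) by ring.
      rewrite Rabs_mult. assert (Rabs (s - t) * K < e).
      { apply (Rmult_lt_compat_r K) in Hst; auto. field_simplify in Hst; lra. }
      unfold K in H. pose proof (Rabs_pos (s - t)). pose proof (Rabs_pos (fst q - fst p)). nra.
  - intros t Ht. apply (proj2 Hg). apply box_convex; auto.
Qed.

Lemma pt_shift n j : (0 < n)%nat -> pt n (n + j) = 1 + pt n j.
Proof. intros H. unfold pt. rewrite plus_INR. apply lt_0_INR in H. field. lra. Qed.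

Section Glob2.
Variables (Om : R -> R -> Prop) (a b : R -> R -> R).
Hypothesis Ha : C1_on Om a.
Hypothesis Hb : C1_on Om b.
Hypothesis Hcl : forall u v, Om u v -> pv a u v = pu b u v.
Hypothesis Hop : open (in_set Om).

Lemma gp_common g1 g2 : path_in Om g1 -> path_in Om g2 -> exists n, (0 < n)%nat /\ gp Om g1 n /\ gp Om g2 n.
Proof.
  intros P1 P2. destruct (path_gp Om Hop g1 P1) as [n1 [H1 G1]].
  destruct (path_gp Om Hop g2 P2) as [n2 [H2 G2]].
  exists (n1 * n2)%nat. split. lia. split.
  apply (refine Om a b Ha Hb Hcl g1 n1 n2); auto.
  rewrite Nat.mul_comm. apply (refine Om a b Ha Hb Hcl g2 n2 n1); auto.
Qed.

Lemma Ip_conc g1 g2 : path_in Om g1 -> path_in Om g2 -> g1 1 = g2 0 ->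
  Ip Om a b (conc g1 g2) = Ip Om a b g1 + Ip Om a b g2.
Proof.
  intros P1 P2 E. destruct (gp_common g1 g2 P1 P2) as [n [Hn [G1 G2]]].
  assert (L : forall k, (k <= n)%nat -> conc g1 g2 (pt (n + n) k) = g1 (pt n k)).
  { intros k Hk. rewrite pt_double by auto. pose proof (pt_unit n k Hk Hn).
    rewrite conc_l by lra. f_equal. field. }
  assert (Rr : forall j, conc g1 g2 (pt (n + n) (n + j)) = g2 (pt n j)).
  { intros j. rewrite pt_double, pt_shift by auto.
    assert (0 <= pt n j) by (unfold pt; apply Rdiv_le_0_compat; [apply pos_INR | apply lt_0_INR; auto]).
    rewrite conc_r by (auto; lra). f_equal. field. }
  assert (Gc : gp Om (conc g1 g2) (n + n)).
  { intros k Hk. destruct (Nat.lt_ge_cases k n) as [Hkn | Hkn].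
    - destruct (G1 k Hkn) as [c [r [Hc Hr]]]. exists c, r. split; auto. intros t Ht.
      rewrite !pt_double in Ht by auto. pose proof (pt_unit n (S k) Hkn Hn).
      rewrite conc_l by lra. apply Hr. lra.
    - destruct (G2 (k - n)%nat ltac:(lia)) as [c [r [Hc Hr]]]. exists c, r. split; auto. intros t Ht.
      replace k with (n + (k - n))%nat in Ht by lia. replace (S (n + (k - n))) with (n + S (k - n))%nat in Ht by lia.
      rewrite !pt_double, !pt_shift in Ht by auto.
      assert (0 <= pt n (k - n)) by (unfold pt; apply Rdiv_le_0_compat; [apply pos_INR | apply lt_0_INR; auto]).
      rewrite conc_r by (auto; lra). apply Hr. lra. }
  rewrite (Ip_eq Om a b Ha Hb Hcl _ (n + n) ltac:(lia) Gc).
  rewrite (Ip_eq Om a b Ha Hb Hcl g1 n Hn G1), (Ip_eq Om a b Ha Hb Hcl g2 n Hn G2).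
  unfold Sg. rewrite psum_add. f_equal.
  - apply psum_ext. intros k Hk. rewrite !L by lia. reflexivity.
  - apply psum_ext. intros k Hk. replace (S (n + k)) with (n + S k)%nat by lia. rewrite !Rr. reflexivity.
Qed.

Lemma Ip_rev g : path_in Om g -> Ip Om a b (rev g) = - Ip Om a b g.
Proof.
  intros P. destruct (path_gp Om Hop g P) as [n [Hn G]].
  assert (Gr : gp Om (rev g) n).
  { intros k Hk. destruct (G (n - S k)%nat ltac:(lia)) as [c [r [Hc Hr]]]. exists c, r. split; auto.
    intros t Ht. unfold rev. apply Hr. replace (S (n - S k)) with (n - k)%nat by lia.
    rewrite !pt_rev by lia. lra. }
  rewrite (Ip_eq Om a b Ha Hb Hcl _ n Hn Gr), (Ip_eq Om a b Ha Hb Hcl g n Hn G).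
  unfold Sg. rewrite (psum_rev (fun k => Dp a b (g (pt n k)) (g (pt n (S k))))), <- psum_opp.
  apply psum_ext. intros k Hk. unfold rev.
  destruct (G (n - S k)%nat ltac:(lia)) as [c [r [Hc Hr]]].
  assert (E1 : 1 - pt n k = pt n (n - k)) by (rewrite pt_rev by lia; ring).
  assert (E2 : 1 - pt n (S k) = pt n (n - S k)) by (rewrite pt_rev by lia; ring).
  rewrite E1, E2. replace (S (n - S k)) with (n - k)%nat in Hr |- * by lia.
  pose proof (pt_le n (n - S k) Hn). replace (S (n - S k)) with (n - k)%nat in H by lia.
  apply (D_anti Om a b Ha Hb Hcl c r); [exact Hc | apply Hr; lra | apply Hr; lra].
Qed.

Lemma path_indep g1 g2 : path_in Om g1 -> path_in Om g2 -> g1 0 = g2 0 -> g1 1 = g2 1 ->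
  (forall g, path_in Om g -> g 0 = g 1 ->
    exists H : R * R -> R * R,
      cont_sq H /\ (forall p, unit_sq p -> in_set Om (H p)) /\
      (forall t, unit_I t -> H (0, t) = g t /\ H (1, t) = g 0) /\
      (forall s, unit_I s -> H (s, 0) = g 0 /\ H (s, 1) = g 0)) ->
  Ip Om a b g1 = Ip Om a b g2.
Proof.
  intros P1 P2 E0 E1 SC.
  assert (Er : g1 1 = rev g2 0) by (unfold rev; rewrite Rminus_0_r; auto).
  pose proof (conc_path Om g1 (rev g2) P1 (rev_path Om g2 P2) Er) as PL.
  assert (L0 : conc g1 (rev g2) 0 = conc g1 (rev g2) 1).
  { rewrite conc_l by lra. rewrite conc_r by (auto; lra). unfold rev.
    replace (2 * 0) with 0 by ring. replace (1 - (2 * 1 - 1)) with 0 by ring. auto. }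
  pose proof (loop_zero Om a b Ha Hb Hcl Hop _ PL L0 (SC _ PL L0)) as Z.
  rewrite Ip_conc, Ip_rev in Z; auto. lra. apply rev_path; auto.
Qed.

End Glob2.

Section Poinc.
Variables (Om : R -> R -> Prop) (a b : R -> R -> R).
Hypothesis Ha : C1_on Om a.
Hypothesis Hb : C1_on Om b.
Hypothesis Hcl : forall u v, Om u v -> pv a u v = pu b u v.
Hypothesis SC : simply_connected_domain Om.

Lemma Ip_seg c r p q : goodbox Om c r -> inbox c r p -> inbox c r q -> Ip Om a b (seg p q) = Dp a b p q.
Proof.
  intros Hg Hp Hq.
  assert (G1 : gp Om (seg p q) 1).
  { intros k Hk. exists c, r. split; auto. intros t Ht. apply box_convex; auto.
    replace k with 0%nat in Ht by lia. rewrite pt_0, pt_n in Ht by lia. lra. }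
  rewrite (Ip_eq Om a b Ha Hb Hcl _ 1 ltac:(lia) G1). unfold Sg; simpl.
  rewrite pt_0, pt_n by lia. unfold seg. destruct p, q; simpl.
  replace (r0 + 0 * (r2 - r0)) with r0 by ring. replace (r1 + 0 * (r3 - r1)) with r1 by ring.
  replace (r0 + 1 * (r2 - r0)) with r2 by ring. replace (r1 + 1 * (r3 - r1)) with r3 by ring. ring.
Qed.

Lemma poincare_loc : exists G : R*R -> R, forall p, in_set Om p -> exists c r, goodbox Om c r /\ inbox c r p /\
  forall q, inbox c r q -> G q = G p + Dp a b p q.
Proof.
  destruct SC as [[[u0 [v0 H0]] [Hop Hconn]] Hsc].
  pose (p0 := (u0, v0)).
  pose (gam := fun p => epsilon (inhabits (fun _ : R => p0)) (fun g => path_in Om g /\ g 0 = p0 /\ g 1 = p)).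
  assert (Hgam : forall p, in_set Om p -> path_in Om (gam p) /\ gam p 0 = p0 /\ gam p 1 = p).
  { intros p Hp. unfold gam. apply epsilon_spec. apply Hconn; auto. }
  exists (fun p => Ip Om a b (gam p)). intros p Hp.
  destruct (open_box Om Hop p Hp) as [r Hr]. exists p, r. split; auto. split.
  { split; rewrite Rminus_eq_0, Rabs_R0; apply cond_pos. }
  intros q Hq. assert (Hpp : inbox p r p) by (split; rewrite Rminus_eq_0, Rabs_R0; apply cond_pos).
  assert (Hqo : in_set Om q) by (apply (proj2 Hr); auto).
  destruct (Hgam p Hp) as [P1 [E10 E11]]. destruct (Hgam q Hqo) as [P2 [E20 E21]].
  pose proof (seg_path Om p r p q Hr Hpp Hq) as PS.
  assert (Es : gam p 1 = seg p q 0) by (rewrite E11; unfold seg; destruct p; simpl; f_equal; ring).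
  pose proof (conc_path Om _ _ P1 PS Es) as PC.
  rewrite <- (Ip_seg p r p q Hr Hpp Hq).
  rewrite <- (Ip_conc Om a b Ha Hb Hcl Hop _ _ P1 PS Es).
  apply (path_indep Om a b Ha Hb Hcl Hop); auto.
  - rewrite conc_l by lra. replace (2*0) with 0 by ring. congruence.
  - rewrite conc_r by (auto; lra). replace (2*1-1) with 1 by ring. rewrite E21.
    unfold seg. destruct p, q; simpl; f_equal; ring.
Qed.

Lemma poincare : exists G : R -> R -> R, forall u v, Om u v ->
  is_derive (fun x => G x v) u (a u v) /\ is_derive (fun y => G u y) v (b u v).
Proof.
  destruct poincare_loc as [G HG]. exists (fun u v => G (u, v)). intros u v Huv.
  destruct (HG (u, v) Huv) as [c [r [Hg [Hp Hl]]]]. split.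
  - apply (is_derive_ext_loc (fun x => G (u, v) + Dp a b (u, v) (x, v))).
    + apply (filter_imp (fun x => inbox c r (x, v))). 2: exact (loc_x c r (u, v) Hp).
      intros x Hx. symmetry. apply Hl. auto.
    + replace (a u v) with (0 + a u v) by ring. apply isd_plus. apply isd_const.
      exact (Dprim_u Om a b Ha Hb Hcl c r (u, v) (u, v) Hg Hp Hp).
  - apply (is_derive_ext_loc (fun y => G (u, v) + Dp a b (u, v) (u, y))).
    + apply (filter_imp (fun y => inbox c r (u, y))). 2: exact (loc_y c r (u, v) Hp).
      intros x Hx. symmetry. apply Hl. auto.
    + replace (b u v) with (0 + b u v) by ring. apply isd_plus. apply isd_const.
      exact (Dprim_v Om a b Hb c r (u, v) (u, v) Hg Hp Hp).
Qed.

End Poinc.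

Lemma exd_plus (f g : R -> R) x : ex_derive f x -> ex_derive g x -> ex_derive (fun t => f t + g t) x.
Proof. intros. apply (ex_derive_plus f g); auto. Qed.
Lemma exd_const (k x : R) : ex_derive (fun _ : R => k) x.
Proof. apply (ex_derive_const (K:=R_AbsRing) (V:=R_NormedModule)). Qed.
Lemma isd_mult (f g : R -> R) x df dg : is_derive f x df -> is_derive g x dg ->
  is_derive (fun t => f t * g t) x (df * g x + f x * dg).
Proof. intros. apply (is_derive_mult f g); auto. intros; apply Rmult_comm. Qed.
Lemma exd_isd (f : R -> R) x : ex_derive f x -> is_derive f x (Derive f x).
Proof. apply Derive_correct. Qed.

Section Ext.
Variable Om : R -> R -> Prop.
Hypothesis Hop : open (in_set Om).

Lemma loc2d_Om u v : Om u v -> locally_2d (fun x y => Om x y) u v.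
Proof.
  intros H. destruct (open_box Om Hop (u, v) H) as [r Hr]. exists r. intros x y Hx Hy.
  apply (proj2 Hr (x, y)). split; simpl; auto.
Qed.

Lemma eq_loc2d (f g : R -> R -> R) : (forall u v, Om u v -> f u v = g u v) ->
  forall u v, Om u v -> locally_2d (fun x y => f x y = g x y) u v.
Proof.
  intros E u v H. destruct (loc2d_Om u v H) as [d Hd]. exists d. intros; apply E, Hd; auto.
Qed.

Lemma pu_ext_on (f g : R -> R -> R) : (forall u v, Om u v -> f u v = g u v) ->
  forall u v, Om u v -> pu f u v = pu g u v.
Proof.
  intros E u v H. apply Derive_ext_loc. apply (locally_2d_1d_const_y (fun x y => f x y = g x y)).
  apply eq_loc2d; auto.
Qed.

Lemma pv_ext_on (f g : R -> R -> R) : (forall u v, Om u v -> f u v = g u v) ->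
  forall u v, Om u v -> pv f u v = pv g u v.
Proof.
  intros E u v H. apply Derive_ext_loc. apply (locally_2d_1d_const_x (fun x y => f x y = g x y)).
  apply eq_loc2d; auto.
Qed.

Lemma C1_ext_on (f g : R -> R -> R) : (forall u v, Om u v -> f u v = g u v) ->
  C1_on Om f -> C1_on Om g.
Proof.
  intros E Hf u v H. destruct (Hf u v H) as [H1 [H2 [H3 [H4 H5]]]].
  split; [|split; [|split; [|split]]].
  - apply (ex_derive_ext_loc (fun x => f x v)); auto.
    apply (locally_2d_1d_const_y (fun x y => f x y = g x y)). apply eq_loc2d; auto.
  - apply (ex_derive_ext_loc (fun y => f u y)); auto.
    apply (locally_2d_1d_const_x (fun x y => f x y = g x y)). apply eq_loc2d; auto.
  - apply (continuity_2d_pt_ext_loc f); auto. apply eq_loc2d; auto.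
  - apply (continuity_2d_pt_ext_loc (pu f)); auto. apply eq_loc2d; auto. apply pu_ext_on; auto.
  - apply (continuity_2d_pt_ext_loc (pv f)); auto. apply eq_loc2d; auto. apply pv_ext_on; auto.
Qed.

Lemma pu_plus (f g : R -> R -> R) u v : ex_derive (fun x => f x v) u -> ex_derive (fun x => g x v) u ->
  pu (fun a b => f a b + g a b) u v = pu f u v + pu g u v.
Proof. intros. unfold pu. apply (Derive_plus (fun x => f x v) (fun x => g x v)); auto. Qed.
Lemma pv_plus (f g : R -> R -> R) u v : ex_derive (fun y => f u y) v -> ex_derive (fun y => g u y) v ->
  pv (fun a b => f a b + g a b) u v = pv f u v + pv g u v.
Proof. intros. unfold pv. apply (Derive_plus (fun y => f u y) (fun y => g u y)); auto. Qed.
Lemma pu_mult (f g : R -> R -> R) u v : ex_derive (fun x => f x v) u -> ex_derive (fun x => g x v) u ->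
  pu (fun a b => f a b * g a b) u v = pu f u v * g u v + f u v * pu g u v.
Proof. intros. unfold pu. apply (Derive_mult (fun x => f x v) (fun x => g x v)); auto. Qed.
Lemma pv_mult (f g : R -> R -> R) u v : ex_derive (fun y => f u y) v -> ex_derive (fun y => g u y) v ->
  pv (fun a b => f a b * g a b) u v = pv f u v * g u v + f u v * pv g u v.
Proof. intros. unfold pv. apply (Derive_mult (fun y => f u y) (fun y => g u y)); auto. Qed.
Lemma pu_const (k : R) u v : pu (fun _ _ => k) u v = 0.
Proof. unfold pu, pv. apply Derive_const. Qed.
Lemma pv_const (k : R) u v : pv (fun _ _ => k) u v = 0.
Proof. unfold pu, pv. apply Derive_const. Qed.

Lemma C1_const (k : R) : C1_on Om (fun _ _ => k).
Proof.
  intros u v H. split; [|split; [|split; [|split]]]; try apply exd_const; try apply continuity_2d_pt_const.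
  - apply (continuity_2d_pt_ext (fun _ _ => 0)). intros; symmetry; apply pu_const. apply continuity_2d_pt_const.
  - apply (continuity_2d_pt_ext (fun _ _ => 0)). intros; symmetry; apply pv_const. apply continuity_2d_pt_const.
Qed.

Lemma C1_plus (f g : R -> R -> R) : C1_on Om f -> C1_on Om g -> C1_on Om (fun a b => f a b + g a b).
Proof.
  intros Hf Hg u v H. destruct (Hf u v H) as [F1 [F2 [F3 [F4 F5]]]]. destruct (Hg u v H) as [G1 [G2 [G3 [G4 G5]]]].
  assert (E1 : forall x y, Om x y -> pu f x y + pu g x y = pu (fun a b => f a b + g a b) x y).
  { intros x y Hxy. symmetry. apply pu_plus. exact (proj1 (Hf x y Hxy)). exact (proj1 (Hg x y Hxy)). }
  assert (E2 : forall x y, Om x y -> pv f x y + pv g x y = pv (fun a b => f a b + g a b) x y).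
  { intros x y Hxy. symmetry. apply pv_plus. exact (proj1 (proj2 (Hf x y Hxy))). exact (proj1 (proj2 (Hg x y Hxy))). }
  split; [|split; [|split; [|split]]].
  - exact (exd_plus _ _ _ F1 G1).
  - exact (exd_plus _ _ _ F2 G2).
  - exact (continuity_2d_pt_plus _ _ _ _ F3 G3).
  - exact (continuity_2d_pt_ext_loc _ _ _ _ (eq_loc2d _ _ E1 u v H) (continuity_2d_pt_plus _ _ _ _ F4 G4)).
  - exact (continuity_2d_pt_ext_loc _ _ _ _ (eq_loc2d _ _ E2 u v H) (continuity_2d_pt_plus _ _ _ _ F5 G5)).
Qed.

Lemma C1_mult (f g : R -> R -> R) : C1_on Om f -> C1_on Om g -> C1_on Om (fun a b => f a b * g a b).
Proof.
  intros Hf Hg u v H. destruct (Hf u v H) as [F1 [F2 [F3 [F4 F5]]]]. destruct (Hg u v H) as [G1 [G2 [G3 [G4 G5]]]].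
  assert (E1 : forall x y, Om x y -> pu f x y * g x y + f x y * pu g x y = pu (fun a b => f a b * g a b) x y).
  { intros x y Hxy. symmetry. apply pu_mult. exact (proj1 (Hf x y Hxy)). exact (proj1 (Hg x y Hxy)). }
  assert (E2 : forall x y, Om x y -> pv f x y * g x y + f x y * pv g x y = pv (fun a b => f a b * g a b) x y).
  { intros x y Hxy. symmetry. apply pv_mult. exact (proj1 (proj2 (Hf x y Hxy))). exact (proj1 (proj2 (Hg x y Hxy))). }
  split; [|split; [|split; [|split]]].
  - exact (ex_derive_mult (fun x => f x v) (fun x => g x v) _ F1 G1).
  - exact (ex_derive_mult (fun x => f u x) (fun x => g u x) _ F2 G2).
  - exact (continuity_2d_pt_mult _ _ _ _ F3 G3).
  - exact (continuity_2d_pt_ext_loc _ _ _ _ (eq_loc2d _ _ E1 u v H)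
      (continuity_2d_pt_plus _ _ _ _ (continuity_2d_pt_mult _ _ _ _ F4 G3) (continuity_2d_pt_mult _ _ _ _ F3 G4))).
  - exact (continuity_2d_pt_ext_loc _ _ _ _ (eq_loc2d _ _ E2 u v H)
      (continuity_2d_pt_plus _ _ _ _ (continuity_2d_pt_mult _ _ _ _ F5 G3) (continuity_2d_pt_mult _ _ _ _ F3 G5))).
Qed.

Lemma C2_ext_on (f g : R -> R -> R) : (forall u v, Om u v -> f u v = g u v) ->
  C2_on Om f -> C2_on Om g.
Proof.
  intros E [H1 [H2 H3]]. split. apply (C1_ext_on f); auto. split.
  apply (C1_ext_on (pu f)); auto. apply pu_ext_on; auto.
  apply (C1_ext_on (pv f)); auto. apply pv_ext_on; auto.
Qed.

Lemma C2_const (k : R) : C2_on Om (fun _ _ => k).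
Proof.
  split. apply C1_const. split.
  apply (C1_ext_on (fun _ _ => 0)). intros; symmetry; apply pu_const. apply C1_const.
  apply (C1_ext_on (fun _ _ => 0)). intros; symmetry; apply pv_const. apply C1_const.
Qed.

Lemma C2_plus (f g : R -> R -> R) : C2_on Om f -> C2_on Om g -> C2_on Om (fun a b => f a b + g a b).
Proof.
  intros [F1 [F2 F3]] [G1 [G2 G3]]. split. apply C1_plus; assumption. split.
  - apply (C1_ext_on (fun a b => pu f a b + pu g a b)).
    + intros x y H. symmetry. apply pu_plus. exact (proj1 (F1 x y H)). exact (proj1 (G1 x y H)).
    + apply C1_plus; assumption.
  - apply (C1_ext_on (fun a b => pv f a b + pv g a b)).
    + intros x y H. symmetry. apply pv_plus. exact (proj1 (proj2 (F1 x y H))). exact (proj1 (proj2 (G1 x y H))).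
    + apply C1_plus; assumption.
Qed.

Lemma C2_mult (f g : R -> R -> R) : C2_on Om f -> C2_on Om g -> C2_on Om (fun a b => f a b * g a b).
Proof.
  intros [F1 [F2 F3]] [G1 [G2 G3]]. split. apply C1_mult; assumption. split.
  - apply (C1_ext_on (fun a b => pu f a b * g a b + f a b * pu g a b)).
    + intros x y H. symmetry. apply pu_mult. exact (proj1 (F1 x y H)). exact (proj1 (G1 x y H)).
    + apply C1_plus; apply C1_mult; assumption.
  - apply (C1_ext_on (fun a b => pv f a b * g a b + f a b * pv g a b)).
    + intros x y H. symmetry. apply pv_mult. exact (proj1 (proj2 (F1 x y H))). exact (proj1 (proj2 (G1 x y H))).
    + apply C1_plus; apply C1_mult; assumption.
Qed.

End Ext.

Lemma between_le u x t : Rmin u x <= t <= Rmax u x -> Rabs (t - u) <= Rabs (x - u).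
Proof.
  intros [H1 H2]. unfold Rmin, Rmax in *. destruct (Rle_dec u x).
  - rewrite !Rabs_right by lra. lra.
  - rewrite !Rabs_left1 by lra. lra.
Qed.

Lemma cont_from_partials (G A : R -> R -> R) u v :
  locally_2d (fun x y => is_derive (fun t => G t y) x (A x y)) u v ->
  continuity_2d_pt A u v -> continuous (fun y => G u y) v -> continuity_2d_pt G u v.
Proof.
  intros [d1 Hd1] HA Hc eps.
  destruct (HA (mkposreal 1 Rlt_0_1)) as [d2 Hd2]. simpl in Hd2.
  assert (He2 : 0 < eps / 2) by (pose proof (cond_pos eps); lra).
  destruct (Hc (ball (G u v) (eps/2)) (locally_ball _ (mkposreal _ He2))) as [d3 Hd3].
  set (K := Rabs (A u v) + 1).
  assert (HK : 0 < K) by (unfold K; pose proof (Rabs_pos (A u v)); lra).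
  assert (Hd4 : 0 < eps / (2 * K)) by (apply Rdiv_lt_0_compat; [apply cond_pos | lra]).
  assert (Hd : 0 < Rmin (Rmin d1 d2) (Rmin d3 (eps / (2 * K)))).
  { repeat apply Rmin_glb_lt; try apply cond_pos; auto. }
  exists (mkposreal _ Hd). simpl. intros x y Hx Hy.
  pose proof (Rmin_l (Rmin d1 d2) (Rmin d3 (eps / (2 * K)))).
  pose proof (Rmin_r (Rmin d1 d2) (Rmin d3 (eps / (2 * K)))).
  pose proof (Rmin_l d1 d2). pose proof (Rmin_r d1 d2).
  pose proof (Rmin_l d3 (eps / (2 * K))). pose proof (Rmin_r d3 (eps / (2 * K))).
  destruct (MVT_gen (fun t => G t y) u x (fun t => A t y)) as [c [Hc1 Hc2]].
  - intros t Ht. apply (Hd1 t y). pose proof (between_le u x t ltac:(lra)). lra. lra.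
  - intros t Ht. apply continuity_pt_filterlim. apply (ex_derive_continuous (K:=R_AbsRing) (V:=R_NormedModule) (fun s => G s y) t).
    exists (A t y). apply (Hd1 t y). pose proof (between_le u x t Ht). lra. lra.
  - pose proof (between_le u x c Hc1).
    assert (HAc : Rabs (A c y) < K).
    { assert (Rabs (A c y - A u v) < 1) by (apply Hd2; lra).
      unfold K. pose proof (Rabs_triang_inv (A c y) (A u v)). lra. }
    assert (Hy3 : Rabs (G u y - G u v) < eps / 2) by (apply (Hd3 y); apply ballR; lra).
    replace (G x y - G u v) with ((G x y - G u y) + (G u y - G u v)) by ring.
    eapply Rle_lt_trans. apply Rabs_triang. simpl in Hc2. rewrite Hc2, Rabs_mult.
    assert (Rabs (A c y) * Rabs (x - u) <= K * (eps / (2 * K))).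
    { apply Rmult_le_compat; try apply Rabs_pos; lra. }
    replace (K * (eps / (2 * K))) with (eps / 2) in H6 by (field; lra). lra.
Qed.

Lemma C2_of_prim Om (G A B : R -> R -> R) : open (in_set Om) -> C1_on Om A -> C1_on Om B ->
  (forall u v, Om u v -> is_derive (fun x => G x v) u (A u v) /\ is_derive (fun y => G u y) v (B u v)) ->
  C2_on Om G.
Proof.
  intros Hop HA HB HG.
  assert (EA : forall u v, Om u v -> A u v = pu G u v).
  { intros u v H. symmetry. apply is_derive_unique. apply HG; auto. }
  assert (EB : forall u v, Om u v -> B u v = pv G u v).
  { intros u v H. symmetry. apply is_derive_unique. apply HG; auto. }
  split; [|split].
  - intros u v H. split; [|split; [|split; [|split]]].
    + exists (A u v). apply HG; auto.
    + exists (B u v). apply HG; auto.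
    + apply (cont_from_partials G A).
      * destruct (loc2d_Om Om Hop u v H) as [d Hd]. exists d. intros x y Hx Hy. apply HG. apply Hd; auto.
      * exact (C1_c Om A u v HA H).
      * apply (ex_derive_continuous (K:=R_AbsRing) (V:=R_NormedModule)). exists (B u v). apply HG; auto.
    + apply (continuity_2d_pt_ext_loc A). apply (eq_loc2d Om Hop); auto. exact (C1_c Om A u v HA H).
    + apply (continuity_2d_pt_ext_loc B). apply (eq_loc2d Om Hop); auto. exact (C1_c Om B u v HB H).
  - apply (C1_ext_on Om Hop A); auto.
  - apply (C1_ext_on Om Hop B); auto.
Qed.

Lemma pu_zero u v : pu (fun _ _ => 0) u v = 0.
Proof. unfold pu. apply Derive_const. Qed.
Lemma pv_zero u v : pv (fun _ _ => 0) u v = 0.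
Proof. unfold pv. apply Derive_const. Qed.

Lemma dz_real f u v : dz (cplx f) u v = (/2 * pu f u v, - (/2 * pv f u v)).
Proof.
  unfold dz, Cpu, Cpv. change (ReF (cplx f)) with f. change (ImF (cplx f)) with (fun _ _ : R => 0).
  rewrite pu_zero, pv_zero. unfold RtoC, Ci, Cmult, Cminus, Cplus, Copp; simpl. f_equal; ring.
Qed.

Lemma dzb_eq g u v : dzb g u v = (/2 * (pu (ReF g) u v - pv (ImF g) u v), /2 * (pu (ImF g) u v + pv (ReF g) u v)).
Proof.
  unfold dzb, Cpu, Cpv. unfold RtoC, Ci, Cmult, Cplus; simpl. f_equal; ring.
Qed.

Lemma dzbdz f u v : dzb (dz (cplx f)) u v =
  (/4 * (pu (pu f) u v + pv (pv f) u v), /4 * (pv (pu f) u v - pu (pv f) u v)).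
Proof.
  rewrite dzb_eq.
  assert (E1 : pu (ReF (dz (cplx f))) u v = /2 * pu (pu f) u v).
  { unfold pu at 1. rewrite (Derive_ext _ (fun x => /2 * pu f x v)). apply Derive_scal.
    intros t. unfold ReF. rewrite dz_real. reflexivity. }
  assert (E2 : pv (ReF (dz (cplx f))) u v = /2 * pv (pu f) u v).
  { unfold pv at 1. rewrite (Derive_ext _ (fun y => /2 * pu f u y)). apply Derive_scal.
    intros t. unfold ReF. rewrite dz_real. reflexivity. }
  assert (E3 : pu (ImF (dz (cplx f))) u v = - (/2 * pu (pv f) u v)).
  { unfold pu at 1. rewrite (Derive_ext _ (fun x => - (/2 * pv f x v))). rewrite Derive_opp, Derive_scal. reflexivity.
    intros t. unfold ImF. rewrite dz_real. reflexivity. }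
  assert (E4 : pv (ImF (dz (cplx f))) u v = - (/2 * pv (pv f) u v)).
  { unfold pv at 1. rewrite (Derive_ext _ (fun y => - (/2 * pv f u y))). rewrite Derive_opp, Derive_scal. reflexivity.
    intros t. unfold ImF. rewrite dz_real. reflexivity. }
  rewrite E1, E2, E3, E4. f_equal; field.
Qed.

Lemma isd_scal' (f : R -> R) x k df : is_derive f x df -> is_derive (fun t => k * f t) x (k * df).
Proof. apply is_derive_scal. Qed.

Lemma isd_shape (P Q R1 S1 T U : R -> R) x dP dQ dR dS dT dU k1 k2 k3 sg :
  is_derive P x dP -> is_derive Q x dQ -> is_derive R1 x dR -> is_derive S1 x dS ->
  is_derive T x dT -> is_derive U x dU ->
  is_derive (fun t => k1 * P t + k2 * Q t + k3 * (R1 t * S1 t + sg * (T t * U t))) x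
   (k1 * dP + k2 * dQ + k3 * (dR * S1 x + R1 x * dS + sg * (dT * U x + T x * dU))).
Proof.
  intros HP HQ HR HS HT HU.
  apply isd_plus. apply isd_plus; apply isd_scal'; auto.
  apply isd_scal'. apply isd_plus. apply isd_mult; auto. apply isd_scal'. apply isd_mult; auto.
Qed.

Lemma isd_lin (f g : R -> R) x k1 k2 df dg : is_derive f x df -> is_derive g x dg ->
  is_derive (fun t => k1 * f t + k2 * g t) x (k1 * df + k2 * dg).
Proof. intros. apply isd_plus; apply isd_scal'; auto. Qed.

Lemma schwarz_C2 Om f u v : open (in_set Om) -> C2_on Om f -> Om u v -> pu (pv f) u v = pv (pu f) u v.
Proof.
  intros Hop [H1 [H2 H3]] H.
  apply (Schwarz f u v).
  - destruct (loc2d_Om Om Hop u v H) as [d Hd]. exists d. intros x y Hx Hy.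
    pose proof (Hd x y Hx Hy) as Hxy.
    split; [exact (C1_exu Om f x y H1 Hxy) | split; [exact (C1_exv Om f x y H1 Hxy) | split]].
    + exact (proj1 (H3 x y Hxy)).
    + exact (proj1 (proj2 (H2 x y Hxy))).
  - exact (proj1 (proj2 (proj2 (proj2 (H3 u v H))))).
  - exact (proj2 (proj2 (proj2 (proj2 (H2 u v H))))).
Qed.

Lemma C1_of_C2 Om f : C2_on Om f -> C1_on Om f.
Proof. intros [H _]; exact H. Qed.
Lemma C1_pu Om f : C2_on Om f -> C1_on Om (pu f).
Proof. intros [_ [H _]]; exact H. Qed.
Lemma C1_pv Om f : C2_on Om f -> C1_on Om (pv f).
Proof. intros [_ [_ H]]; exact H. Qed.

Lemma isd_u Om f u v : C1_on Om f -> Om u v -> is_derive (fun x => f x v) u (pu f u v).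
Proof. intros Hf H. apply exd_isd. exact (C1_exu Om f u v Hf H). Qed.
Lemma isd_v Om f u v : C1_on Om f -> Om u v -> is_derive (fun y => f u y) v (pv f u v).
Proof. intros Hf H. apply exd_isd. exact (C1_exv Om f u v Hf H). Qed.

Lemma pu_of_isd f u v l : is_derive (fun x => f x v) u l -> pu f u v = l.
Proof. intros H. apply is_derive_unique. exact H. Qed.
Lemma pv_of_isd f u v l : is_derive (fun y => f u y) v l -> pv f u v = l.
Proof. intros H. apply is_derive_unique. exact H. Qed.

Lemma pu_lin_ext (F f g : R -> R -> R) k1 k2 u v : (forall a b, F a b = k1 * f a b + k2 * g a b) ->
  ex_derive (fun x => f x v) u -> ex_derive (fun x => g x v) u -> pu F u v = k1 * pu f u v + k2 * pu g u v.
Proof.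
  intros E H1 H2. unfold pu at 1. rewrite (Derive_ext _ (fun x => k1 * f x v + k2 * g x v)) by (intros; apply E).
  apply is_derive_unique. apply isd_lin; apply exd_isd; auto.
Qed.
Lemma pv_lin_ext (F f g : R -> R -> R) k1 k2 u v : (forall a b, F a b = k1 * f a b + k2 * g a b) ->
  ex_derive (fun y => f u y) v -> ex_derive (fun y => g u y) v -> pv F u v = k1 * pv f u v + k2 * pv g u v.
Proof.
  intros E H1 H2. unfold pv at 1. rewrite (Derive_ext _ (fun y => k1 * f u y + k2 * g u y)) by (intros; apply E).
  apply is_derive_unique. apply isd_lin; apply exd_isd; auto.
Qed.

Lemma rot_zero c s X Y : c * c + s * s = 1 -> c * X - s * Y = 0 -> s * X + c * Y = 0 -> X = 0 /\ Y = 0.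
Proof.
  intros Hcs H1 H2.
  assert (EX : X = c * (c * X - s * Y) + s * (s * X + c * Y)).
  { transitivity (X * (c * c + s * s)). rewrite Hcs; ring. ring. }
  assert (EY : Y = - s * (c * X - s * Y) + c * (s * X + c * Y)).
  { transitivity (Y * (c * c + s * s)). rewrite Hcs; ring. ring. }
  rewrite H1, H2 in EX, EY. split; lra.
Qed.

Ltac c1 Hop := lazymatch goal with
 | |- C1_on ?O (fun a b => @?F a b + @?G a b) => apply (C1_plus O Hop F G); c1 Hop
 | |- C1_on ?O (fun a b => @?F a b * @?G a b) => apply (C1_mult O Hop F G); c1 Hop
 | |- C1_on ?O (fun _ _ => ?k) => apply (C1_const O k)
 | _ => idtac end.

Ltac c2 Hop := lazymatch goal with
 | |- C2_on ?O (fun a b => @?F a b + @?G a b) => apply (C2_plus O Hop F G); c2 Hop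
 | |- C2_on ?O (fun a b => @?F a b * @?G a b) => apply (C2_mult O Hop F G); c2 Hop
 | |- C2_on ?O (fun _ _ => ?k) => apply (C2_const O Hop k)
 | _ => idtac end.

Theorem mainTheorem4 :
  forall (Om : R -> R -> Prop) (h : R -> R -> C) (M N : R -> R -> R) (tau : R),
    simply_connected_domain Om ->
    WD2 Om h M N ->
    let h_tau := fun u v => (cis (- tau) * h u v)%C in
    let N_tau := N in
    let rhs := fun u v =>
      (cis tau * dz (cplx M) u v
       - (cis tau - cis (- tau)) / RtoC 2 * h u v * dz (cplx N) u v)%C in
    (exists M_tau : R -> R -> R,
        C2_on Om M_tau /\ forall u v, Om u v -> dz (cplx M_tau) u v = rhs u v) /\
    (forall M_tau : R -> R -> R,
        C2_on Om M_tau -> (forall u v, Om u v -> dz (cplx M_tau) u v = rhs u v) ->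
        WD2 Om h_tau M_tau N_tau).
Proof.
  intros Om h M N tau SC WD h_tau N_tau rhs.
  destruct WD as [[Hh1 Hh2] [HM [HN Hpt]]].
  assert (Hop : open (in_set Om)) by (destruct SC as [[_ [Ho _]] _]; exact Ho).
  assert (Hcs : cos tau * cos tau + sin tau * sin tau = 1).
  { pose proof (sin2_cos2 tau). unfold Rsqr in H. lra. }
  pose (A := fun u v => cos tau * pu M u v + sin tau * pv M u v +
       sin tau * (ImF h u v * pu N u v + (-1) * (ReF h u v * pv N u v))).
  pose (B := fun u v => (- sin tau) * pu M u v + cos tau * pv M u v +
       sin tau * (ReF h u v * pu N u v + 1 * (ImF h u v * pv N u v))).
  assert (Hrhs : forall u v, rhs u v = (/2 * A u v, - (/2 * B u v))).
  { intros u v. unfold rhs, A, B, ReF, ImF. rewrite !dz_real. unfold cis. rewrite cos_neg, sin_neg.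
    destruct (h u v) as [x y]. unfold Cminus, Cdiv, Cmult, Cinv, Cplus, Copp, RtoC; simpl. f_equal; field. }
  assert (C1A : C1_on Om A).
  { unfold A. c1 Hop.
    all: first [exact (C1_pu _ _ HM) | exact (C1_pv _ _ HM) | exact (C1_pu _ _ HN) | exact (C1_pv _ _ HN)
               | exact (C1_of_C2 _ _ Hh1) | exact (C1_of_C2 _ _ Hh2)]. }
  assert (C1B : C1_on Om B).
  { unfold B. c1 Hop.
    all: first [exact (C1_pu _ _ HM) | exact (C1_pv _ _ HM) | exact (C1_pu _ _ HN) | exact (C1_pv _ _ HN)
               | exact (C1_of_C2 _ _ Hh1) | exact (C1_of_C2 _ _ Hh2)]. }
  assert (Loc : forall u v, Om u v ->
    pu (pv M) u v = pv (pu M) u v /\ pu (pv N) u v = pv (pu N) u v /\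
    pu (ReF h) u v = pv (ImF h) u v /\ pu (ImF h) u v = - pv (ReF h) u v /\
    pv (pv M) u v = ReF h u v * (pu (pu N) u v + pv (pv N) u v) - pu (pu M) u v).
  { intros u v H. destruct (Hpt u v H) as [_ [Hdzb [Hlap _]]].
    split; [apply (schwarz_C2 Om); auto|]. split; [apply (schwarz_C2 Om); auto|].
    rewrite dzb_eq in Hdzb. pose proof (f_equal fst Hdzb) as E1. pose proof (f_equal snd Hdzb) as E2.
    simpl in E1, E2. split; [lra|]. split; [lra|].
    rewrite !dzbdz in Hlap. pose proof (f_equal fst Hlap) as E3. simpl in E3.
    change (fst (h u v)) with (ReF h u v) in E3.
    assert (E4 : pu (pu M) u v + pv (pv M) u v = ReF h u v * (pu (pu N) u v + pv (pv N) u v)).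
    { apply (Rmult_eq_reg_l (/4)). rewrite E3. ring. apply Rinv_neq_0_compat. lra. }
    lra. }
  pose proof (C1_pu _ _ HM) as HM1. pose proof (C1_pv _ _ HM) as HM2.
  pose proof (C1_pu _ _ HN) as HN1. pose proof (C1_pv _ _ HN) as HN2.
  pose proof (C1_of_C2 _ _ Hh1) as H1. pose proof (C1_of_C2 _ _ Hh2) as H2.
  assert (DAu : forall u v, Om u v -> pu A u v = cos tau * pu (pu M) u v + sin tau * pu (pv M) u v +
     sin tau * (pu (ImF h) u v * pu N u v + ImF h u v * pu (pu N) u v +
       (-1) * (pu (ReF h) u v * pv N u v + ReF h u v * pu (pv N) u v))).
  { intros u v H. apply pu_of_isd.
    exact (isd_shape _ _ _ _ _ _ u _ _ _ _ _ _ (cos tau) (sin tau) (sin tau) (-1)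
      (isd_u Om _ u v HM1 H) (isd_u Om _ u v HM2 H) (isd_u Om _ u v H2 H)
      (isd_u Om _ u v HN1 H) (isd_u Om _ u v H1 H) (isd_u Om _ u v HN2 H)). }
  assert (DAv : forall u v, Om u v -> pv A u v = cos tau * pv (pu M) u v + sin tau * pv (pv M) u v +
     sin tau * (pv (ImF h) u v * pu N u v + ImF h u v * pv (pu N) u v +
       (-1) * (pv (ReF h) u v * pv N u v + ReF h u v * pv (pv N) u v))).
  { intros u v H. apply pv_of_isd.
    exact (isd_shape _ _ _ _ _ _ v _ _ _ _ _ _ (cos tau) (sin tau) (sin tau) (-1)
      (isd_v Om _ u v HM1 H) (isd_v Om _ u v HM2 H) (isd_v Om _ u v H2 H)
      (isd_v Om _ u v HN1 H) (isd_v Om _ u v H1 H) (isd_v Om _ u v HN2 H)). }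
  assert (DBu : forall u v, Om u v -> pu B u v = (- sin tau) * pu (pu M) u v + cos tau * pu (pv M) u v +
     sin tau * (pu (ReF h) u v * pu N u v + ReF h u v * pu (pu N) u v +
       1 * (pu (ImF h) u v * pv N u v + ImF h u v * pu (pv N) u v))).
  { intros u v H. apply pu_of_isd.
    exact (isd_shape _ _ _ _ _ _ u _ _ _ _ _ _ (- sin tau) (cos tau) (sin tau) 1
      (isd_u Om _ u v HM1 H) (isd_u Om _ u v HM2 H) (isd_u Om _ u v H1 H)
      (isd_u Om _ u v HN1 H) (isd_u Om _ u v H2 H) (isd_u Om _ u v HN2 H)). }
  assert (DBv : forall u v, Om u v -> pv B u v = (- sin tau) * pv (pu M) u v + cos tau * pv (pv M) u v +
     sin tau * (pv (ReF h) u v * pu N u v + ReF h u v * pv (pu N) u v +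
       1 * (pv (ImF h) u v * pv N u v + ImF h u v * pv (pv N) u v))).
  { intros u v H. apply pv_of_isd.
    exact (isd_shape _ _ _ _ _ _ v _ _ _ _ _ _ (- sin tau) (cos tau) (sin tau) 1
      (isd_v Om _ u v HM1 H) (isd_v Om _ u v HM2 H) (isd_v Om _ u v H1 H)
      (isd_v Om _ u v HN1 H) (isd_v Om _ u v H2 H) (isd_v Om _ u v HN2 H)). }
  assert (Hcl : forall u v, Om u v -> pv A u v = pu B u v).
  { intros u v H. destruct (Loc u v H) as [SM [SN [CR1 [CR2 LM]]]].
    rewrite DAv, DBu by auto. rewrite SM, SN, CR1, CR2, LM. ring. }
  split.
  - destruct (poincare Om A B C1A C1B Hcl SC) as [G HG]. exists G. split.
    + exact (C2_of_prim Om G A B Hop C1A C1B HG).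
    + intros u v H. rewrite dz_real, Hrhs. destruct (HG u v H) as [Du Dv].
      rewrite (pu_of_isd G u v _ Du), (pv_of_isd G u v _ Dv). reflexivity.
  - intros Mt HMt HEq. unfold N_tau.
    assert (HA' : forall u v, Om u v -> pu Mt u v = A u v /\ pv Mt u v = B u v).
    { intros u v H. pose proof (HEq u v H) as E. rewrite dz_real, Hrhs in E.
      pose proof (f_equal fst E) as E1. pose proof (f_equal snd E) as E2. simpl in E1, E2. split; lra. }
    assert (Hhr : forall a b, ReF h_tau a b = cos tau * ReF h a b + sin tau * ImF h a b).
    { intros. unfold h_tau, ReF, ImF, cis. rewrite cos_neg, sin_neg. destruct (h a b). unfold Cmult; simpl. ring. }
    assert (Hhi : forall a b, ImF h_tau a b = cos tau * ImF h a b + (- sin tau) * ReF h a b).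
    { intros. unfold h_tau, ReF, ImF, cis. rewrite cos_neg, sin_neg. destruct (h a b). unfold Cmult; simpl. ring. }
    split; [|split; [|split]].
    + split.
      * apply (C2_ext_on Om Hop (fun a b => cos tau * ReF h a b + sin tau * ImF h a b)).
        intros; symmetry; apply Hhr. c2 Hop; assumption.
      * apply (C2_ext_on Om Hop (fun a b => cos tau * ImF h a b + (- sin tau) * ReF h a b)).
        intros; symmetry; apply Hhi. c2 Hop; assumption.
    + exact HMt.
    + exact HN.
    + intros u v H. destruct (Hpt u v H) as [Hne [Hdzb [Hlap Hnz]]].
      destruct (Loc u v H) as [SM [SN [CR1 [CR2 LM]]]].
      destruct (HA' u v H) as [EA EB].
      split; [|split; [|split]].
      * intros E. apply Hne. pose proof (f_equal fst E) as E1. pose proof (f_equal snd E) as E2.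
        change (fst (h_tau u v)) with (ReF h_tau u v) in E1. change (snd (h_tau u v)) with (ImF h_tau u v) in E2.
        rewrite Hhr in E1. rewrite Hhi in E2. simpl in E1, E2.
        destruct (rot_zero (cos tau) (sin tau) (ReF h u v) (- ImF h u v) Hcs) as [X Y]; try lra.
        unfold ReF, ImF in X, Y. apply injective_projections; simpl; lra.
      * rewrite dzb_eq.
        rewrite (pu_lin_ext _ _ _ _ _ u v Hhr (proj1 (H1 u v H)) (proj1 (H2 u v H))).
        rewrite (pv_lin_ext _ _ _ _ _ u v Hhi (proj1 (proj2 (H2 u v H))) (proj1 (proj2 (H1 u v H)))).
        rewrite (pu_lin_ext _ _ _ _ _ u v Hhi (proj1 (H2 u v H)) (proj1 (H1 u v H))).
        rewrite (pv_lin_ext _ _ _ _ _ u v Hhr (proj1 (proj2 (H1 u v H))) (proj1 (proj2 (H2 u v H)))).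
        rewrite CR1, CR2. unfold RtoC. f_equal; ring.
      * rewrite !dzbdz.
        rewrite (pu_ext_on Om Hop (pu Mt) A (fun a b Hab => proj1 (HA' a b Hab)) u v H).
        rewrite (pv_ext_on Om Hop (pv Mt) B (fun a b Hab => proj2 (HA' a b Hab)) u v H).
        rewrite (pv_ext_on Om Hop (pu Mt) A (fun a b Hab => proj1 (HA' a b Hab)) u v H).
        rewrite (pu_ext_on Om Hop (pv Mt) B (fun a b Hab => proj2 (HA' a b Hab)) u v H).
        change (fst (h_tau u v)) with (ReF h_tau u v). rewrite Hhr.
        rewrite DAu, DBv, DAv, DBu by auto. rewrite SM, SN, CR1, CR2, LM.
        unfold RtoC, Cmult; simpl. f_equal; ring.
      * rewrite !dz_real. rewrite EA, EB. intros E. apply Hnz. rewrite !dz_real.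
        pose proof (f_equal fst E) as E1. pose proof (f_equal snd E) as E2.
        change (fst (h_tau u v)) with (ReF h_tau u v) in E1, E2. rewrite Hhr in E1, E2.
        unfold A, B in E1, E2. unfold Cminus, Cmult, Cplus, Copp, RtoC in E1, E2; simpl in E1, E2.
        destruct (rot_zero (cos tau) (sin tau) (pu M u v - ReF h u v * pu N u v)
            (- pv M u v + ReF h u v * pv N u v) Hcs) as [X Y]; try lra.
        unfold Cminus, Cmult, Cplus, Copp, RtoC; simpl.
        change (fst (h u v)) with (ReF h u v).
        apply injective_projections; simpl; lra.
Qed.
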